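(* Let $g\in\mathscr H$. Two solutions $f,h\in\mathscr H$ of $L(y)=g$ are equal if and only if $f_\gamma=h_\gamma$ for all $\gamma\in-\mathcal S(L)$.
   Context: Let $\mathbf K$ be a field and $\ell\geq 2$ an integer. Let $\mathscr H$ be the field of Hahn series $f=\sum_{\gamma\in\mathbb Q}f_\gamma z^\gamma$ with coefficients in $\mathbf K$ and well-ordered support. Let $\phi_\ell$ be the automorphism $f(z)\mapsto f(z^\ell)$. Let $L=a_n\phi_\ell^n+\dots+a_0$ with $n\geq1$, $a_i\in\mathbf K[z]$, $a_0a_n\neq0$, acting by $L(f)=\sum_i a_i f(z^{\ell^i})$. The Newton polygon of $L$ is the convex hull of $\{(\ell^i,j): 0\le i\le n,\ j\geq\operatorname{val} a_i\}\subset\mathbb R^2$ (where $\operatorname{val} a_i$ is the $z$-adic valuation); the slopes of its non-vertical edges form the set $\mathcal S(L)$, and $-\mathcal S(L)=\{-\mu:\mu\in\mathcal S(L)\}$. *)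

(* Defs.v *)
From HB Require Import structures.
From mathcomp Require Import all_boot all_order all_algebra.
Set Implicit Arguments. Unset Strict Implicit. Unset Printing Implicit Defensive.
Import Order.TTheory GRing.Theory Num.Theory.
Local Open Scope ring_scope.

(* A formal series with rational exponents and coefficients in K is
   represented by its coefficient function  gamma |-> f_gamma. *)

(* Hahn series: the support is well-ordered (every nonempty subset of the
   support has a least element; Q is totally ordered). *)
Definition is_hahn (K : fieldType) (f : rat -> K) : Prop :=
  forall P : rat -> Prop,
    (exists x, P x /\ f x != 0) ->
    exists m, [/\ P m, f m != 0 & forall y, P y -> f y != 0 -> m <= y].

Definition zval (K : fieldType) (p : {poly K}) : nat :=
  find (fun c => c != 0) (polyseq p).

(* The operator L = sum_{i<=n} a_i phi_l^i acting on coefficient functions: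
   the coefficient of z^gamma in a_i(z) f(z^(l^i)) is
   sum_k (a_i)_k f_{(gamma - k)/l^i}. *)
Definition Lop (K : fieldType) (l n : nat) (a : nat -> {poly K})
  (f : rat -> K) : rat -> K :=
  fun gamma =>
    \sum_(i < n.+1) \sum_(k < size (a i))
       (a i)`_k * f ((gamma - k%:R) / (l ^ i)%:R).

(* Points generating the Newton polygon: (l^i, j) with j >= val a_i
   (only for a_i <> 0, since val 0 = +oo). *)
Definition NP_point (K : fieldType) (l n : nat) (a : nat -> {poly K})
  (x y : rat) : Prop :=
  exists i : nat, [/\ (i <= n)%N, a i != 0 &
    exists j : nat, [/\ (zval (a i) <= j)%N, x = (l ^ i)%:R & y = j%:R]].

(* mu is the slope of a non-vertical edge of the Newton polygon (the convex
   hull of the NP_points): there is a supporting line y = mu x + c with the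
   whole polygon on or above it, meeting the polygon in a segment of positive
   length, i.e. containing two distinct generating points. *)
Definition NP_slope (K : fieldType) (l n : nat) (a : nat -> {poly K})
  (mu : rat) : Prop :=
  exists c : rat,
    (forall x y, NP_point l n a x y -> mu * x + c <= y) /\
    exists x1 y1 x2 y2,
      [/\ NP_point l n a x1 y1, NP_point l n a x2 y2, (x1, y1) != (x2, y2),
          mu * x1 + c = y1 & mu * x2 + c = y2].

(* Main.v *)
Require Import Defs.
From HB Require Import structures.
From mathcomp Require Import all_boot all_order all_algebra.
From mathcomp Require Import lra.
From Stdlib Require Import Classical FunctionalExtensionality.
Import Order.TTheory GRing.Theory Num.Theory.
Local Open Scope ring_scope.

Lemma min_diff (K : fieldType) (f h : rat -> K) :
  is_hahn f -> is_hahn h -> (exists x, f x != h x) ->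
  exists m, f m != h m /\ forall y, f y != h y -> m <= y.
Proof.
move=> Hf Hh [x Hx].
have Px : f x != 0 \/ h x != 0.
  case: (eqVneq (f x) 0) => [E|]; last by left.
  right; apply/eqP => E2; move: Hx; by rewrite E E2 eqxx.
case: (classic (exists y, f y != h y /\ f y != 0)) => [Ef|Nf];
case: (classic (exists y, f y != h y /\ h y != 0)) => [Eh|Nh].
- have [m1 [P1 N1 M1]] := Hf _ Ef.
  have [m2 [P2 N2 M2]] := Hh _ Eh.
  case: (leP m1 m2) => L.
  + exists m1; split => // y Py.
    case: (eqVneq (f y) 0) => Fy; last exact: M1.
    have Hy : h y != 0 by apply: contra Py => /eqP ->; rewrite Fy.
    exact: le_trans L (M2 _ Py Hy).
  + exists m2; split => // y Py.
    case: (eqVneq (h y) 0) => Hy; last exact: M2.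
    have Fy : f y != 0 by apply: contra Py => /eqP ->; rewrite Hy.
    exact: le_trans (ltW L) (M1 _ Py Fy).
- have [m1 [P1 N1 M1]] := Hf _ Ef.
  exists m1; split => // y Py.
  case: (eqVneq (f y) 0) => Fy; last exact: M1.
  exfalso; apply: Nh; exists y; split => //.
  by apply: contra Py => /eqP ->; rewrite Fy.
- have [m2 [P2 N2 M2]] := Hh _ Eh.
  exists m2; split => // y Py.
  case: (eqVneq (h y) 0) => Hy; last exact: M2.
  exfalso; apply: Nf; exists y; split => //.
  by apply: contra Py => /eqP ->; rewrite Hy.
- exfalso; case: Px => Px.
  + by apply: Nf; exists x.
  + by apply: Nh; exists x.
Qed.

Lemma zval_lt (K : fieldType) (p : {poly K}) : p != 0 ->
  (zval p < size p)%N /\ p`_(zval p) != 0.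
Proof.
move=> p0.
have Hs : has (fun c => c != 0) p.
  apply/hasP; exists (lead_coef p); last by rewrite lead_coef_eq0.
  rewrite lead_coefE; apply: mem_nth; rewrite prednK ?size_poly_gt0 //.
split; first by rewrite /zval -has_find.
exact: (nth_find 0 Hs).
Qed.

Arguments min_diff {K f h}.
Arguments zval_lt {K p}.

Theorem mainTheorem5 (K : fieldType) (l n : nat) (a : nat -> {poly K})
  (g : rat -> K) :
  (2 <= l)%N -> (1 <= n)%N -> a 0%N != 0 -> a n != 0 ->
  is_hahn g ->
  forall f h : rat -> K, is_hahn f -> is_hahn h ->
    Lop l n a f = g -> Lop l n a h = g ->
    (f = h <-> forall gamma : rat, NP_slope l n a (- gamma) -> f gamma = h gamma).
Proof.
move=> l2 n1 a0 an Hg f h Hf Hh Lf Lh; split; first by move=> ->.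
move=> Hsl.
apply: functional_extensionality => x0.
apply/eqP; apply/negPn/negP => Hx0.
have [g0 [Hg0 Mg0]] := min_diff Hf Hh (ex_intro _ x0 Hx0).
set d := fun x => f x - h x.
have Ld : forall gam, Lop l n a d gam = 0.
  move=> gam.
  have -> : Lop l n a d gam = Lop l n a f gam - Lop l n a h gam.
    rewrite /Lop -sumrB; apply: eq_bigr => i _; rewrite -sumrB.
    by apply: eq_bigr => k _; rewrite /d mulrBr.
  by rewrite Lf Lh subrr.
have dnz : forall y, d y != 0 -> g0 <= y.
  by move=> y; rewrite /d subr_eq0; apply: Mg0.
have dg0 : d g0 != 0 by rewrite /d subr_eq0.
have lpos : forall i : nat, (0 : rat) < (l ^ i)%:R.
  by move=> i; rewrite ltr0n expn_gt0 (leq_trans _ l2).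
pose w (i : 'I_n.+1) : rat := (zval (a i))%:R + (l ^ i)%:R * g0.
pose P := [pred i : 'I_n.+1 | a i != 0].
have P0 : P ord0 by [].
case: (@arg_minP _ _ _ ord0 P w P0) => i0 Pi0 Mi0.
case: (classic (exists j, [/\ P j, j != i0 & w j = w i0])) => [[j [Pj ji Ej]]|Nj].
-
  apply/negP: Hg0; rewrite negbK; apply/eqP; apply: Hsl.
  exists (w i0); split.
    move=> x y [i [iN ai [k [kv -> ->]]]].
    have iP : P (@Ordinal n.+1 i iN) by [].
    have wi : w (@Ordinal n.+1 i iN) = (zval (a i))%:R + (l ^ i)%:R * g0 by [].
    move: (Mi0 _ iP); rewrite wi /w.
    have : ((zval (a i))%:R : rat) <= k%:R by rewrite ler_nat.
    lra.
  exists (l ^ i0)%:R, (zval (a i0))%:R, (l ^ j)%:R, (zval (a j))%:R.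
  split.
  + exists i0; split => //; first by rewrite -ltnS.
    by exists (zval (a i0)).
  + exists j; split => //; first by rewrite -ltnS.
    by exists (zval (a j)).
  + apply/negP => /eqP [] /eqP; rewrite eqr_nat eqn_exp2l // => /eqP E.
    by move: ji; rewrite -val_eqE /= E eqxx.
  + rewrite /w; lra.
  + move: Ej; rewrite /w; lra.
-
  have Lt : forall j : 'I_n.+1, P j -> j != i0 -> w i0 < w j.
    move=> j Pj ji; rewrite lt_neqAle Mi0 // andbT.
    apply/eqP => E; apply: Nj; exists j; split => //.
  have [vlt cnz] := zval_lt Pi0.
  have := Ld (w i0).
  rewrite /Lop (bigD1 i0) //= (bigD1 (Ordinal vlt)) //=.
  rewrite big1 ?addr0; last first.
    move=> k /eqP kv.
    have [klt|kge] := ltnP k (zval (a i0)).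
      by move: (before_find 0 klt) => /negbFE/eqP ->; rewrite mul0r.
    case: (eqVneq (d ((w i0 - k%:R) / (l ^ i0)%:R)) 0) => [->|dk]; first by rewrite mulr0.
    exfalso.
    have kgt : (zval (a i0) < k)%N by rewrite ltn_neqAle eq_sym kge andbT; apply/eqP => E; apply: kv; apply: val_inj.
    have := dnz _ dk; rewrite ler_pdivlMr //.
    have : ((zval (a i0)).+1%:R : rat) <= k%:R by rewrite ler_nat.
    rewrite /w -addn1 natrD; lra.
  have e : (w i0 - (zval (a i0))%:R) / (l ^ i0)%:R = g0.
    by rewrite /w addrAC subrr add0r [_ * g0]mulrC mulfK // gt_eqF.
  rewrite e big1 ?addr0.
    by move/eqP; rewrite mulf_eq0 (negbTE cnz) (negbTE dg0).
  move=> i ii0.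
  apply: big1 => k _.
  case: (eqVneq (a i) 0) => [E|ai].
    have H : exists m, (m < size (a i))%N by exists k; exact: ltn_ord.
    exfalso; case: H => m; rewrite E size_poly0 //.
  have [klt|kge] := ltnP k (zval (a i)).
    by move: (before_find 0 klt) => /negbFE/eqP ->; rewrite mul0r.
  case: (eqVneq (d ((w i0 - k%:R) / (l ^ i)%:R)) 0) => [->|dk]; first by rewrite mulr0.
  exfalso.
  have := Lt i ai ii0.
  have := dnz _ dk; rewrite ler_pdivlMr //.
  have : ((zval (a i))%:R : rat) <= k%:R by rewrite ler_nat.
  rewrite /w; lra.
Qed.
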